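(* Let $T$ be a full binary tree of order $n$. Then $b(T)\le \lceil n^{1/2}\rceil$.
   Context: A full binary tree is a rooted tree in which every vertex has either $0$ or $2$ children. Burning process of a connected graph $G$: initially all vertices are unburned. In each round $r\ge 1$, one vertex $x_r$ that is unburned at the end of round $r-1$ is chosen as the source of round $r$; in round $r$ the source $x_r$ becomes burned, and so does every vertex that was unburned at the end of round $r-1$ and is adjacent to a vertex burned at the end of round $r-1$. Burned vertices stay burned. If all vertices are burned at the end of round $k$ (and not earlier), $(x_1,\dots,x_k)$ is called a burning sequence for $G$ of length $k$. The burning number $b(G)$ is the minimum length of a burning sequence for $G$. *)

(* Defs.v *)
From mathcomp Require Import all_boot.
Set Implicit Arguments. Unset Strict Implicit. Unset Printing Implicit Defensive.

Section Graphs.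
Variables (T : finType) (e : rel T).

Definition simple_graph : Prop := symmetric e /\ irreflexive e.

(* a tree: connected and without cycles (a cycle = closed walk on >= 3
   pairwise distinct vertices) *)
Definition is_tree : Prop :=
  (forall x y : T, connect e x y) /\
  (forall c : seq T, ucycle e c -> size c <= 2).

Definition nbhd (B : {set T}) : {set T} :=
  B :|: [set v | [exists u in B, e u v]].

Definition ball (x : T) (k : nat) : {set T} := iter k nbhd [set x].

(* graph distance (for connected graphs; any vertex is within #|T| steps) *)
Definition dist (x y : T) : nat := find (fun k => y \in ball x k) (iota 0 #|T|.+1).

Definition children (r v : T) : {set T} :=
  [set u | e v u && (dist r u == (dist r v).+1)].

Definition full_binary_tree : Prop :=
  is_tree /\ exists r : T, forall v : T, #|children r v| \in [:: 0; 2].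

Definition burn_step (B : {set T}) (x : T) : {set T} := x |: nbhd B.

Definition burned (xs : seq T) : {set T} := foldl burn_step set0 xs.

Definition burning_seq (xs : seq T) : bool :=
  [&& [forall i : 'I_(size xs), tnth (in_tuple xs) i \notin burned (take i xs)],
      burned xs == [set: T] &
      burned (take (size xs).-1 xs) != [set: T] ].

Definition has_burning_seq (k : nat) : bool :=
  [exists t : k.-tuple T, burning_seq t].

(* burning number: least k admitting a burning sequence of length k
   (for a connected nonempty graph such k exists and is <= #|T|) *)
Definition burning_number : nat := find has_burning_seq (iota 0 #|T|.+1).

End Graphs.

Definition ceil_sqrt (n : nat) : nat := find (fun m => n <= m ^ 2) (iota 0 n.+1).

(* Main.v *)
Require Import Defs.
From mathcomp Require Import all_boot.
From mathcomp Require Import zify.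
Set Implicit Arguments. Unset Strict Implicit. Unset Printing Implicit Defensive.

Section Balls.
Variables (T : finType) (e : rel T).
Hypothesis esym : symmetric e.

Lemma in_nbhd (B : {set T}) x :
  (x \in nbhd e B) = (x \in B) || [exists u in B, e u x].
Proof. by rewrite /nbhd !inE. Qed.

Lemma sub_nbhd (B : {set T}) : B \subset nbhd e B.
Proof. by apply/subsetP => x Hx; rewrite in_nbhd Hx. Qed.

Lemma nbhd_mono (A B : {set T}) : A \subset B -> nbhd e A \subset nbhd e B.
Proof.
move/subsetP => AB; apply/subsetP => x; rewrite !in_nbhd => /orP[/AB -> //|].
move/exists_inP => [u /AB Hu Hux]; apply/orP; right; apply/exists_inP; by exists u.
Qed.

Lemma ballS x m : ball e x m.+1 = nbhd e (ball e x m).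
Proof. by []. Qed.

Lemma ball0 x y : (y \in ball e x 0) = (y == x).
Proof. by rewrite /ball /= inE. Qed.

Lemma ball_mono x m n : m <= n -> ball e x m \subset ball e x n.
Proof.
move=> mn; rewrite -(subnKC mn); elim: (n - m) => [|k IH]; first by rewrite addn0.
rewrite addnS ballS; apply: subset_trans IH (sub_nbhd _).
Qed.

Lemma ball_monoP x m n y : m <= n -> y \in ball e x m -> y \in ball e x n.
Proof. by move/(ball_mono x)/subsetP; apply. Qed.

Lemma ball_edge x m y z : y \in ball e x m -> e y z -> z \in ball e x m.+1.
Proof.
move=> Hy Hyz; rewrite ballS in_nbhd; apply/orP; right; apply/exists_inP; by exists y.
Qed.

Lemma ball_trans x y z m n : y \in ball e x m -> z \in ball e y n -> z \in ball e x (m + n).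
Proof.
move=> Hy; elim: n z => [|n IH] z; first by rewrite ball0 addn0 => /eqP ->.
rewrite ballS in_nbhd addnS => /orP[/IH H|/exists_inP [w /IH Hw Hwz]].
  exact: ball_monoP H.
exact: ball_edge Hw Hwz.
Qed.

Lemma ball_sym x y m : y \in ball e x m -> x \in ball e y m.
Proof.
elim: m y => [|m IH] y; first by rewrite !ball0 eq_sym.
rewrite ballS in_nbhd => /orP[/IH H|/exists_inP [w /IH Hw Hwy]].
  exact: ball_monoP H.
have Hyw : w \in ball e y 1 by apply: (@ball_edge y 0 y w); rewrite ?ball0 // esym.
by have := ball_trans Hyw Hw; rewrite add1n.
Qed.

Lemma ball_path x p : path e x p -> last x p \in ball e x (size p).
Proof.
elim: p x => [|y p IH] x /=; first by rewrite ball0.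
move=> /andP[Hxy /IH Hp].
have Hy : y \in ball e x 1 by apply: (@ball_edge x 0 x y); rewrite ?ball0.
by have := ball_trans Hy Hp; rewrite add1n.
Qed.

Hypothesis conn : forall x y, connect e x y.

Lemma ball_all x y : y \in ball e x #|T|.
Proof.
have /connectP [p Hp ->] := conn x y.
case: (shortenP Hp) => p' Hp' Hu _.
apply: ball_monoP (ball_path Hp').
have := max_card (mem (x :: p')); rewrite (card_uniqP Hu) /=; lia.
Qed.

Lemma dist_spec x y m : (y \in ball e x m) = (dist e x y <= m).
Proof.
have Hhas : has (fun k => y \in ball e x k) (iota 0 #|T|.+1).
  apply/hasP; exists #|T|; last exact: ball_all.
  by rewrite mem_iota; lia.
have Hlt : dist e x y < #|T|.+1.
  by rewrite /dist; have := Hhas; rewrite has_find size_iota.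
have HD : y \in ball e x (dist e x y).
  have := nth_find 0 Hhas; rewrite nth_iota //.
apply/idP/idP => H.
  rewrite leqNgt; apply/negP => Hm.
  have := before_find 0 Hm; rewrite nth_iota ?H //; lia.
exact: ball_monoP HD.
Qed.

Lemma dist_le x y : dist e x y <= #|T|.
Proof. by rewrite -dist_spec ball_all. Qed.

Lemma dist0 x y : (dist e x y == 0) = (y == x).
Proof. by rewrite -ball0 dist_spec leqn0. Qed.

Lemma dist_edge x y z : e y z -> dist e x z <= (dist e x y).+1.
Proof.
move=> Hyz; rewrite -dist_spec; apply: ball_edge Hyz; by rewrite dist_spec.
Qed.

Lemma dist_par x z d : dist e x z = d.+1 -> exists2 y, e y z & dist e x y = d.
Proof.
move=> Hz.
have : z \in ball e x d.+1 by rewrite dist_spec Hz.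
rewrite ballS in_nbhd => /orP[|/exists_inP [y Hy Hyz]].
  by rewrite dist_spec Hz ltnn.
exists y => //; move: Hy; rewrite dist_spec => Hy.
have := dist_edge x Hyz; lia.
Qed.

End Balls.

Inductive btree := Lf | Nd of btree & btree.

Fixpoint sz t := match t with Lf => 1 | Nd l r => sz l + sz r + 1 end.
Fixpoint ht t := match t with Lf => 0 | Nd l r => (maxn (ht l) (ht r)).+1 end.
Fixpoint vt t (q : seq bool) := match q, t with
  | [::], _ => true
  | _ :: _, Lf => false
  | b :: q', Nd l r => vt (if b then r else l) q' end.
Fixpoint sub t (q : seq bool) := match q, t with
  | [::], _ => t
  | _ :: _, Lf => Lf
  | b :: q', Nd l r => sub (if b then r else l) q' end.
Fixpoint rep t (q : seq bool) x := match q, t with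
  | [::], _ => x
  | _ :: _, Lf => Lf
  | b :: q', Nd l r => if b then Nd l (rep r q' x) else Nd (rep l q' x) r end.
Fixpoint pd (a b : seq bool) := match a, b with
  | x :: a', y :: b' => if x == y then pd a' b' else size a' + size b' + 2
  | [::], _ => size b
  | _, [::] => size a end.

Lemma vt_nil t : vt t [::] = true.
Proof. by case: t. Qed.

Lemma sub_nil t : sub t [::] = t.
Proof. by case: t. Qed.

Lemma sz_ht t : 2 * ht t + 1 <= sz t.
Proof. elim: t => //= l IHl r IHr; rewrite /maxn; case: ifP; lia. Qed.

Lemma vt_ht t q : vt t q -> size q <= ht t.
Proof.
elim: q t => [|b q IH] [|l r] //= H; have := IH _ H; case: b H => _ /=; lia.
Qed.

Lemma deepest t : exists v, vt t v /\ size v = ht t.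
Proof.
elim: t => [|l [vl [Hl El]] r [vr [Hr Er]]]; first by exists [::].
rewrite /= /maxn; case: ifP => _.
  by exists (true :: vr); rewrite /= Er.
by exists (false :: vl); rewrite /= El.
Qed.

Lemma vt_cat t p w : vt t (p ++ w) = vt t p && vt (sub t p) w.
Proof. by elim: p t => [|b p IH] [|l r] //=. Qed.

Lemma sub_cat t p w : sub (sub t p) w = sub t (p ++ w).
Proof. by elim: p t => [|b p IH] [|l r] //=; case: (w). Qed.

Lemma vt_rep_in t p x w : vt t p -> vt (rep t p x) (p ++ w) = vt x w.
Proof. elim: p t => [|b p IH] [|l r] //=; case: b => /= H; exact: IH. Qed.

Lemma vt_rep_out t p x q : take (size p) q != p -> vt (rep t p x) q = vt t q.
Proof.
elim: p t q => [|b p IH] [|l r] [|c q] //=; first by case: b.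
rewrite eqseq_cons; case: b; case: c => //= H; apply: IH => //.
Qed.

Lemma sz_rep t p x : vt t p -> sz (rep t p x) + sz (sub t p) = sz t + sz x.
Proof.
elim: p t => [|b p IH] [|l r] //=; try lia.
case: b => /= H; have := IH _ H; lia.
Qed.

Lemma vt_rcons t p b : vt t (rcons p b) = vt t p && (if sub t p is Nd _ _ then true else false).
Proof. by rewrite -cats1 vt_cat; case E: (sub t p) => [|l r] //=; rewrite vt_nil. Qed.

Lemma sz_sub_Nd t p b : vt t (rcons p b) ->
  sz (sub t p) = sz (sub t (rcons p b)) + sz (sub t (rcons p (~~ b))) + 1.
Proof.
rewrite vt_rcons -!cats1 -!sub_cat => /andP[_]; case: (sub t p) => //= l r _.
rewrite !sub_nil; case: b => /=; lia.
Qed.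

Lemma pdC a b : pd a b = pd b a.
Proof.
elim: a b => [|x a IH] [|y b] //=; rewrite IH eq_sym; case: eqP => _ //; lia.
Qed.

Lemma pd_cat p a b : pd (p ++ a) (p ++ b) = pd a b.
Proof. by elim: p => //= x p ->; rewrite eqxx. Qed.

Lemma pd_nil a : pd [::] a = size a.
Proof. by []. Qed.

Lemma pd_out p w b : take (size p) b != p -> pd (p ++ w) b = size w + pd p b.
Proof.
elim: p b => [|x p IH] [|y b] //=.
  move=> _; rewrite size_cat; lia.
rewrite eqseq_cons; case: x; case: y => //= H; try exact: IH; rewrite size_cat; lia.
Qed.

Lemma pd_eq0 a b : pd a b = 0 -> a = b.
Proof.
elim: a b => [|x a IH] [|y b] //=; case: eqP => [->|]; [by move/IH => -> | lia].
Qed.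
Definition phi (p : seq bool) (b0 : bool) (a : seq bool) :=
  if take (size p) a == p then p ++ (~~ b0) :: drop (size p) a else a.

Lemma take_p_eq (p a : seq bool) : take (size p) a == p -> a = p ++ drop (size p) a.
Proof. by move/eqP => {1}<-; rewrite cat_take_drop. Qed.

Lemma take_p_cat (p w : seq bool) : take (size p) (p ++ w) == p.
Proof. by rewrite take_size_cat. Qed.

Lemma take_p_ex (p a : seq bool) : take (size p) a == p -> exists w, a = p ++ w.
Proof. move/take_p_eq => ->; by eexists. Qed.

Lemma phi_lift p b0 a b j k : j < k -> pd a b <= j ->
  pd (phi p b0 a) (phi p b0 b) <= j \/ pd (rcons p b0) (phi p b0 b) <= k.
Proof.
rewrite /phi => jk.
case: ifP => Ha; case: ifP => Hb.
- have [wa ->] := take_p_ex Ha; have [wb ->] := take_p_ex Hb.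
  rewrite !drop_size_cat // !pd_cat /= eqxx => H; by left.
- have [wa ->] := take_p_ex Ha.
  rewrite pd_out ?Hb // => H; right.
  by rewrite -cats1 pd_out ?Hb //=; lia.
- have [wb Eb] := take_p_ex Hb; rewrite Eb drop_size_cat //.
  rewrite pdC pd_out ?Ha // => H; right.
  have : pd p a != 0.
    apply/eqP => /pd_eq0 E; move: Ha; by rewrite -E take_size eqxx.
  rewrite -cats1 pd_cat /=; case: b0 H => /= H; lia.
- move=> H; by left.
Qed.

Lemma cover k t : sz t <= k ^ 2 -> exists c : nat -> seq bool,
  (forall j, vt t (c j)) /\ forall q, vt t q -> exists2 j, j < k & pd (c j) q <= j.
Proof.
elim: k t => [|k IH] t.
  by have := sz_ht t; rewrite exp0n; lia.
move=> Hsz.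
case: (leqP (ht t) k) => Hht.
  exists (fun _ => [::]); split => [j|q Hq]; first by rewrite vt_nil.
  exists k => //; rewrite pd_nil; exact: leq_trans (vt_ht Hq) Hht.
have [v [Hv Ev]] := deepest t.
set m := ht t - k - 1.
have mlt : m < size v by rewrite Ev /m; lia.
set p := take m v; set b0 := nth false v m.
have Eu : take m.+1 v = rcons p b0 by rewrite (take_nth false mlt).
set u := rcons p b0.
have Hu : vt t u.
  by move: Hv; rewrite -(cat_take_drop m.+1 v) vt_cat Eu => /andP[].
have Hp : vt t p by move: Hu; rewrite vt_rcons => /andP[].
set s := rcons p (~~ b0).
have Hs : vt t s by move: Hu; rewrite /s !vt_rcons.
have Hsubu : k <= ht (sub t u).
  move: Hv; rewrite -(cat_take_drop m.+1 v) vt_cat Eu => /andP[_] /vt_ht.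
  by rewrite -/u size_drop Ev /m; lia.
have k1 : 0 < k.
  case: (posnP k) => // k0; move: Hsz; have := sz_ht t; rewrite k0 in Hht *; lia.
set t2 := rep t p (sub t s).
have Hsz2 : sz t2 <= k ^ 2.
  have E1 := sz_rep (sub t s) Hp.
  have E2 := sz_sub_Nd Hu.
  have E3 := sz_ht (sub t u).
  rewrite -/t2 in E1; rewrite -/u -/s in E2; rewrite -!mulnn in Hsz *; nia.
have [c2 [Hc2 Cov2]] := IH _ Hsz2.
exists (fun j => if j == k then u else phi p b0 (c2 j)); split.
  move=> j; case: ifP => _ //; rewrite /phi; case: ifP => H.
    have := Hc2 j; have [w ->] := take_p_ex H; rewrite /t2 vt_rep_in // drop_size_cat //.
    by rewrite -cat_rcons vt_cat Hs.
  by have := Hc2 j; rewrite /t2 vt_rep_out ?H.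
move=> q Hq.
have Hlift : forall q2, vt t2 q2 -> phi p b0 q2 = q ->
    exists2 j, j < k.+1 & pd (if j == k then u else phi p b0 (c2 j)) q <= j.
  move=> q2 Hq2 Eq; have [j jk Hj] := Cov2 _ Hq2.
  have [H|H] := phi_lift p b0 jk Hj.
    exists j; first by lia.
    by rewrite (ltn_eqF jk) -Eq.
  by exists k; rewrite ?eqxx // -Eq.
case Htq: (take (size p) q == p).
  have [w0 Eq] := take_p_ex Htq; subst q; move: Hq.
  case: w0 Htq Hlift => [|c w] Htq Hlift.
    move=> _; exists k; rewrite ?eqxx //.
    by rewrite /u -cats1 pd_cat.
  case: (eqVneq c b0) => [->|Hc] Hq.
    exists k; rewrite ?eqxx //.
    rewrite /u -cats1 pd_cat /= eqxx.
    have := vt_ht Hq; rewrite size_cat /= /p size_take mlt /m; lia.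
  apply: (Hlift (p ++ w)).
    have Ec : c = ~~ b0 by move: (c) (b0) Hc => [] [].
    have E : p ++ c :: w = s ++ w by rewrite /s cat_rcons Ec.
    move: Hq; rewrite E; rewrite /t2 vt_rep_in // vt_cat Hs //.
  rewrite /phi take_p_cat; congr (_ ++ _ :: _).
    by move: (c) (b0) Hc => [] [].
  by rewrite drop_size_cat.
apply: (Hlift q); first by rewrite /t2 vt_rep_out ?Htq.
by rewrite /phi Htq.
Qed.
Section Tree.
Variables (T : finType) (e : rel T) (rho : T).
Hypothesis esym : symmetric e.
Hypothesis conn : forall x y, connect e x y.
Hypothesis acyc : forall c : seq T, ucycle e c -> size c <= 2.
Hypothesis full : forall v, #|children e rho v| \in [:: 0; 2].

Local Notation D x := (dist e rho x).

Lemma D_rho x : D x = 0 -> x = rho.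
Proof. by move/eqP; rewrite dist0 //; move/eqP. Qed.

Lemma no_zigzag h a b s : D a = h -> D b = h -> a != b ->
  path e a (rcons s b) -> uniq (a :: rcons s b) -> all (fun z => h < D z) s -> False.
Proof.
elim: h a b s => [|h IH] a b s Ha Hb Hab Hp Hu Hs.
  by move: Hab; rewrite (D_rho Ha) (D_rho Hb) eqxx.
have [a' Ha'a Da'] := dist_par conn Ha.
have [b' Hb'b Db'] := dist_par conn Hb.
have Hdeep : forall z, z \in a :: rcons s b -> h < D z.
  move=> z; rewrite in_cons mem_rcons in_cons => /or3P[/eqP->|/eqP->|Hz].
  - by rewrite Ha.
  - by rewrite Hb.
  - move/allP: Hs => /(_ z Hz); lia.
have Hna' : a' \notin a :: rcons s b.
  by apply/negP => /Hdeep; rewrite Da' ltnn.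
have Hnb' : b' \notin a :: rcons s b.
  by apply/negP => /Hdeep; rewrite Db' ltnn.
case: (eqVneq a' b') => [E|Hne].
  have Hc : ucycle e (a' :: a :: rcons s b).
    apply/andP; split; last by rewrite cons_uniq Hna' Hu.
    rewrite /cycle rcons_cons /= Ha'a /= rcons_path Hp last_rcons /= E esym //.
  by have := acyc Hc; rewrite /= size_rcons.
apply: (IH a' b' (a :: rcons s b)) => //.
- by rewrite rcons_cons /= Ha'a /= rcons_path Hp last_rcons esym.
- by rewrite cons_uniq mem_rcons in_cons negb_or Hne Hna' rcons_uniq Hnb' Hu.
- by apply/allP => z /Hdeep; lia.
Qed.

Lemma par_uniq y1 y2 x : e y1 x -> e y2 x -> D x = (D y1).+1 -> D x = (D y2).+1 -> y1 = y2.
Proof.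
move=> H1 H2 D1 D2; apply/eqP/negP => /negP Hne.
apply: (@no_zigzag (D y1) y1 y2 [:: x]) => //=; last by rewrite D1 ltnSn.
- lia.
- by rewrite H1 esym H2.
- have H3 : y1 != x by apply/eqP => E; move: D1; rewrite E; lia.
  have H4 : x != y2 by apply/eqP => E; move: D2; rewrite E; lia.
  by rewrite !inE !negb_or Hne H3 H4.
Qed.

Definition ch v := children e rho v.
Definition child v (b : bool) := nth v (enum (ch v)) b.

Lemma in_ch v u : (u \in ch v) = e v u && (D u == (D v).+1).
Proof. by rewrite inE. Qed.

Lemma ch2 v : #|ch v| != 0 -> #|ch v| = 2.
Proof. by have := full v; rewrite !inE => /orP[/eqP->|/eqP->]. Qed.

Lemma child_in v b : #|ch v| = 2 -> child v b \in ch v.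
Proof.
move=> H; rewrite -mem_enum; apply: mem_nth; rewrite -cardE H; by case: b.
Qed.

Lemma child_edge v b : #|ch v| = 2 -> e v (child v b).
Proof. by move/(child_in b); rewrite in_ch => /andP[]. Qed.

Lemma child_D v b : #|ch v| = 2 -> D (child v b) = (D v).+1.
Proof. by move/(child_in b); rewrite in_ch => /andP[_ /eqP]. Qed.

Lemma child_inj v b c : #|ch v| = 2 -> child v b = child v c -> b = c.
Proof.
move=> H /eqP; rewrite /child nth_uniq ?enum_uniq -?cardE ?H //; try by case: b; try by case: c.

Qed.

Lemma ch_cases v u : #|ch v| = 2 -> u \in ch v -> exists b, u = child v b.
Proof.
move=> H; rewrite -mem_enum => /(nthP v) [i]; rewrite -cardE H.
case: i => [|[|i]] // _ <-; [by exists false | by exists true].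
Qed.

Fixpoint validT v (q : seq bool) := match q with
  | [::] => true
  | b :: q' => (#|ch v| == 2) && validT (child v b) q' end.
Fixpoint lab v (q : seq bool) := match q with
  | [::] => v
  | b :: q' => lab (child v b) q' end.

Lemma lab_rcons v q b : lab v (rcons q b) = child (lab v q) b.
Proof. by elim: q v => //= c q IH v. Qed.

Lemma validT_rcons v q b : validT v (rcons q b) = validT v q && (#|ch (lab v q)| == 2).
Proof. elim: q v => [|c q IH] v /=; first by rewrite andbT. by rewrite IH andbA. Qed.

Lemma lab_D v q : validT v q -> D (lab v q) = D v + size q.
Proof.
elim: q v => [|b q IH] v /=; first by rewrite addn0.
move=> /andP[/eqP H /IH ->]; rewrite child_D //; lia.
Qed.

Lemma lab_ball v q : validT v q -> lab v q \in ball e v (size q).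
Proof.
elim: q v => [|b q IH] v /=; first by rewrite ball0.
move=> /andP[/eqP H /IH Hq].
have Hc : child v b \in ball e v 1.
  by apply: (@ball_edge _ e v 0 v); rewrite ?ball0 ?child_edge.
by have := ball_trans Hc Hq; rewrite add1n.
Qed.

Lemma lab_pd v a b : validT v a -> validT v b -> lab v b \in ball e (lab v a) (pd a b).
Proof.
elim: a b v => [|x a IH] [|y b] v /=.
- by rewrite ball0.
- move=> _ Hb; exact: (lab_ball (q := y :: b)).
- move=> Ha _; rewrite -ballS; apply: (ball_sym esym); exact: (lab_ball (q := x :: a)).
- move=> /andP[/eqP H Ha] /andP[_ Hb]; case: eqP => [E|_]; first by subst y; exact: IH.
  have H1 : child v x \in ball e (lab (child v x) a) (size a).
    by apply: (ball_sym esym); exact: lab_ball.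
  have H2 : lab v (y :: b) \in ball e v (size b).+1.
    by apply: (lab_ball (q := y :: b)); rewrite /= H eqxx Hb.
  have H3 : v \in ball e (child v x) 1.
    by apply: (ball_sym esym); apply: (@ball_edge _ e v 0 v); rewrite ?ball0 ?child_edge.
  have := ball_trans (ball_trans H1 H3) H2; rewrite /=.
  by apply: ball_monoP; lia.
Qed.

Lemma lab_inj_gen n a b : size a = n -> size b = n -> validT rho a -> validT rho b ->
  lab rho a = lab rho b -> a = b.
Proof.
elim: n a b => [|n IH] a b; first by case: a; case: b.
case/lastP: a => // a x; case/lastP: b => // b y.
rewrite !size_rcons !validT_rcons !lab_rcons => [[Sa] [Sb]] /andP[Va /eqP Ca] /andP[Vb /eqP Cb] E.
have Eab : lab rho a = lab rho b.
  apply: (@par_uniq _ _ (child (lab rho a) x)).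
  - exact: child_edge.
  - by rewrite E; exact: child_edge.
  - exact: child_D.
  - by rewrite E; exact: child_D.
have Eab' := IH _ _ Sa Sb Va Vb Eab.
rewrite Eab' in E Ca *; by rewrite (child_inj Ca E).
Qed.

Lemma lab_inj a b : validT rho a -> validT rho b -> lab rho a = lab rho b -> a = b.
Proof.
move=> Va Vb E; apply: (@lab_inj_gen (size a)) => //.
have := lab_D Va; have := lab_D Vb; rewrite E; lia.
Qed.

Lemma lab_surj x : exists2 q, validT rho q & lab rho q = x.
Proof.
move Ed : (D x) => d; elim: d x Ed => [|d IH] x Ed.
  by exists [::]; rewrite // (D_rho Ed).
have [y Hyx Dy] := dist_par conn Ed.
have [q Vq Lq] := IH _ Dy.
have Hx : x \in ch y by rewrite in_ch Hyx Ed Dy eqxx.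
have Hc : #|ch y| = 2 by apply: ch2; apply/eqP => /eqP; rewrite cards_eq0 => /eqP E; rewrite E inE in Hx.
have [b ->] := ch_cases Hc Hx.
exists (rcons q b); [by rewrite validT_rcons Vq Lq Hc | by rewrite lab_rcons Lq].
Qed.

Fixpoint bld n v := match n with
  | 0 => Lf
  | n'.+1 => if #|ch v| == 2 then Nd (bld n' (child v false)) (bld n' (child v true)) else Lf end.

Lemma bld_vt n v q : #|T| < D v + n -> vt (bld n v) q = validT v q.
Proof.
elim: n v q => [|n IH] v q /=.
  by rewrite addn0 ltnNge dist_le.
move=> Hn; case E: (#|ch v| == 2).
  case: q => [|b q] //=; rewrite E /=.
  have -> : vt (if b then bld n (child v true) else bld n (child v false)) q = vt (bld n (child v b)) q by case: b.
  apply: IH; apply: (leq_trans Hn); have -> := child_D b (eqP E); by rewrite addSnnS.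
by case: q => //= b q; rewrite E.
Qed.

End Tree.
Fixpoint pos t : seq (seq bool) := match t with
  | Lf => [:: [::]]
  | Nd l r => [::] :: (map (cons false) (pos l) ++ map (cons true) (pos r)) end.

Lemma size_pos t : size (pos t) = sz t.
Proof. elim: t => //= l IHl r IHr; rewrite size_cat !size_map IHl IHr; lia. Qed.

Lemma pos_vt t q : q \in pos t -> vt t q.
Proof.
elim: t q => [|l IHl r IHr] q /=; first by rewrite inE => /eqP ->.
rewrite in_cons mem_cat => /or3P[/eqP -> //| /mapP [q' Hq' ->] | /mapP [q' Hq' ->]] /=.
  exact: IHl.
exact: IHr.
Qed.

Lemma uniq_pos t : uniq (pos t).
Proof.
elim: t => //= l IHl r IHr.
rewrite mem_cat negb_or cat_uniq !map_inj_uniq ?IHl ?IHr; try by move=> a b [].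
apply/and4P; split => //.
- by apply/andP; split; apply/mapP => [[q _]].
- by apply/hasP => [[q /mapP [q1 _ ->] /mapP [q2 _]]].
Qed.

Lemma find_le (P : pred nat) s i : i < size s -> P (nth 0 s i) -> find P s <= i.
Proof.
move=> Hi HP; rewrite leqNgt; apply/negP => /(before_find 0); by rewrite HP.
Qed.

Section Burn.
Variables (T : finType) (e : rel T) (x0 : T).

Definition vp (xs : seq T) := forall i, i < size xs -> nth x0 xs i \notin burned e (take i xs).

Lemma burned_rcons xs y : burned e (rcons xs y) = burn_step e (burned e xs) y.
Proof. by rewrite /burned foldl_rcons. Qed.

Lemma vp_rcons xs y : vp xs -> y \notin burned e xs -> vp (rcons xs y).
Proof.
move=> H Hy i; rewrite size_rcons ltnS leq_eqVlt => /orP[/eqP ->|Hi].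
  by rewrite nth_rcons ltnn eqxx -cats1 take_size_cat.
by rewrite nth_rcons Hi -cats1 takel_cat ?(ltnW Hi) //; apply: H.
Qed.

Lemma burn_cover k (c : nat -> T) : k <= #|T| ->
  (forall x, exists2 j, j < k & x \in ball e (c j) j) -> burning_number e <= k.
Proof.
move=> kT Hcov.
have Claim : forall j, j <= k -> exists xs, [/\ vp xs, size xs <= j &
   (burned e xs = setT \/ (size xs = j /\
      forall i, i < j -> ball e (c (k - 1 - i)) (j - 1 - i) \subset burned e xs))].
  elim => [|j IH] Hj.
    exists [::]; split => //; try by move=> i.
    by right; split => // i.
  have [xs [Hvp Hsz [Hall|[Es Hb]]]] := IH (ltnW Hj).
    exists xs; split => //; [exact: leqW | by left].
  case: (pickP (fun z => z \notin burned e xs)) => [z Hz|Hnone]; last first.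
    exists xs; split => //; first exact: leqW.
    left; apply/setP => z; rewrite inE; have := Hnone z; by move/negbFE.
  set cc := c (k - 1 - j).
  set y := if cc \in burned e xs then z else cc.
  have Hy : y \notin burned e xs by rewrite /y; case: ifP => // ->.
  exists (rcons xs y); split; first exact: vp_rcons.
    by rewrite size_rcons Es.
  right; split; first by rewrite size_rcons Es.
  move=> i; rewrite ltnS leq_eqVlt => /orP[/eqP ->|Hi].
    have -> : j.+1 - 1 - j = 0 by lia.
    apply/subsetP => w; rewrite ball0 => /eqP ->.
    rewrite burned_rcons /burn_step in_setU1 -/cc.
    rewrite /y; case: ifP => H; last by rewrite eqxx.
    by rewrite (subsetP (sub_nbhd e _)) ?orbT.
  have -> : j.+1 - 1 - i = (j - 1 - i).+1 by lia.
  rewrite ballS burned_rcons /burn_step; apply: subset_trans (@nbhd_mono _ e _ _ (Hb _ Hi)) _.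
  by apply/subsetP => w Hw; rewrite in_setU1 Hw orbT.
have [xs [Hvp Hsz Hfin]] := Claim k (leqnn k).
have Hall : burned e xs = setT.
  case: Hfin => // [[Es Hb]]; apply/setP => x; rewrite inE.
  have [j jk Hx] := Hcov x.
  have Hi : k - 1 - j < k by lia.
  have := Hb _ Hi; have -> : k - 1 - (k - 1 - j) = j by lia.
  by move/subsetP; apply.
have Hne : size xs != 0.
  apply/eqP => /size0nil E; move: Hall; rewrite E /burned /= => /setP /(_ x0).
  by rewrite !inE.
have Hbs : burning_seq e xs.
  apply/and3P; split.
  - apply/forallP => i; rewrite (tnth_nth x0) /=; apply: Hvp; exact: ltn_ord.
  - by rewrite Hall.
  - have := Hvp (size xs).-1; rewrite prednK ?lt0n // leqnn => /(_ isT).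
    apply: contra => /eqP ->; by rewrite inE.
have Hhas : has_burning_seq e (size xs).
  by apply/existsP; exists (in_tuple xs).
apply: (leq_trans _ Hsz); apply: find_le; rewrite ?size_iota ?nth_iota //; lia.
Qed.

End Burn.
Theorem mainTheorem9 (T : finType) (e : rel T) :
  simple_graph e -> full_binary_tree e ->
  burning_number e <= ceil_sqrt #|T|.
Proof.
move=> [esym _] [[conn acyc] [rho full]].
have Hhas : has (fun m => #|T| <= m ^ 2) (iota 0 #|T|.+1).
  apply/hasP; exists #|T|; first by rewrite mem_iota; lia.
  by rewrite -mulnn; nia.
have Hk : #|T| <= ceil_sqrt #|T| ^ 2.
  have Hf : find (fun m => #|T| <= m ^ 2) (iota 0 #|T|.+1) < #|T|.+1.
    by rewrite -{2}(size_iota 0 #|T|.+1) -has_find.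
  by have := nth_find 0 Hhas; rewrite nth_iota.
have kn : ceil_sqrt #|T| <= #|T|.
  apply: find_le; rewrite ?size_iota ?nth_iota // -mulnn; nia.
set k := ceil_sqrt #|T| in Hk kn *.
set t := bld e rho #|T|.+1 rho.
have Hvt : forall q, vt t q = validT e rho rho q.
  move=> q; apply: bld_vt => //; rewrite (_ : dist e rho rho = 0) //.
  by apply/eqP; rewrite dist0.
have Hsz : sz t <= #|T|.
  rewrite -size_pos -(size_map (lab e rho rho)).
  have Hu : uniq (map (lab e rho rho) (pos t)).
    rewrite map_inj_in_uniq ?uniq_pos // => a b Ha Hb.
    apply: lab_inj => //; by rewrite -Hvt pos_vt.
  by rewrite -(card_uniqP Hu) max_card.
have [c [Hc Cov]] := cover (leq_trans Hsz Hk).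
apply: (@burn_cover _ e rho k (fun j => lab e rho rho (c j))) => // x.
have [q Vq <-] := lab_surj conn full x.
have Vq' : vt t q by rewrite Hvt.
have [j jk Hj] := Cov q Vq'.
exists j => //; apply: ball_monoP Hj _.
apply: lab_pd => //; by rewrite -Hvt.
Qed.
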